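(* Let $R$ be a commutative ring. The assignments $(M,C)\mapsto C^\sharp/C^\flat$ (with $T$ acting by $\theta_C$) and $X\mapsto(X,\mathrm{graph}(T_X))$, where $T_X\in\mathrm{End}_R(X)$ is $x\mapsto Tx$, extend to $R$-linear functors $\sharp/\flat\colon\mathrm{Rel}_R\to\mathrm{Mod}\,R[T,T^{-1}]$ (sending a morphism $f\colon(L,B)\to(M,C)$ to $\ell+B^\flat\mapsto f(\ell)+C^\flat$) and $\mathrm{graph}_T\colon\mathrm{Mod}\,R[T,T^{-1}]\to\mathrm{Rel}_R$ (sending $g$ to $g$). Moreover $(\sharp/\flat)\circ\mathrm{graph}_T$ is the identity functor on $\mathrm{Mod}\,R[T,T^{-1}]$.
   Context: An $R$-linear relation on an $R$-module $M$ is a submodule $C\subseteq M\oplus M$; $Cm=\{m':(m,m')\in C\}$, $CS=\bigcup_{m\in S}Cm$, $C^{-1}=\{(y,x):(x,y)\in C\}$, $\mathrm{graph}(f)=\{(x,f(x))\}$. $\mathrm{Rel}_R$ has objects pairs $(M,C)$ with $C$ a relation on $M$, and morphisms $(L,B)\to(M,C)$ the $R$-linear maps $f\colon L\to M$ with $(f(x),f(y))\in C$ for all $(x,y)\in B$. $C''$ is the set of $m\in M$ for which there exists $(m_n)_{n\in\mathbb{N}}$ in $M$ with $m_0=m$ and $m_{n+1}\in Cm_n$ for all $n$; $C'$ the set of those for which such a sequence exists with $m_n=0$ for $n\gg0$; $C^\sharp=C''\cap(C^{-1})''$, $C^\flat=C''\cap(C^{-1})'+(C^{-1})''\cap C'$.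 It is known that the rule $\theta_C(m+C^\flat)=m'+C^\flat$ if and only if $m'\in C^\sharp\cap(C^\flat+Cm)$ gives a well-defined $R$-module automorphism $\theta_C$ of $C^\sharp/C^\flat$; via $T\mapsto\theta_C$ this makes $C^\sharp/C^\flat$ an $R[T,T^{-1}]$-module. *)

(* Defs.v *)
From HB Require Import structures.
From mathcomp Require Import all_boot all_algebra.
Set Implicit Arguments. Unset Strict Implicit. Unset Printing Implicit Defensive.
Import GRing.Theory.
Local Open Scope ring_scope.

Definition relation (R : pzRingType) (M : lmodType R) := M -> M -> Prop.

Section Rel.
Variables (R : comPzRingType).

Definition is_linear_relation (M : lmodType R) (C : relation M) : Prop :=
  [/\ C 0 0,
      (forall x y x' y', C x y -> C x' y' -> C (x + x') (y + y'))
    & (forall (a : R) x y, C x y -> C (a *: x) (a *: y))].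

Definition rel_inv (M : lmodType R) (C : relation M) : relation M :=
  fun x y => C y x.

Definition graph (M : lmodType R) (f : M -> M) : relation M :=
  fun x y => y = f x.

Definition is_rel_morphism (L M : lmodType R) (B : relation L)
  (C : relation M) (f : {linear L -> M}) : Prop :=
  forall x y, B x y -> C (f x) (f y).

Definition rel_dd (M : lmodType R) (C : relation M) (m : M) : Prop :=
  exists u : nat -> M, u 0%N = m /\ forall n, C (u n) (u n.+1).

Definition rel_d (M : lmodType R) (C : relation M) (m : M) : Prop :=
  exists u : nat -> M, [/\ u 0%N = m, (forall n, C (u n) (u n.+1))
                        & exists N, forall n, (N <= n)%N -> u n = 0].

Definition rel_sharp (M : lmodType R) (C : relation M) (m : M) : Prop :=
  rel_dd C m /\ rel_dd (rel_inv C) m.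

Definition rel_flat (M : lmodType R) (C : relation M) (m : M) : Prop :=
  exists a b, [/\ m = a + b,
                  rel_dd C a /\ rel_d (rel_inv C) a
                & rel_dd (rel_inv C) b /\ rel_d C b].

(* Representative-level graph of theta_C :
   theta_C (m + C^flat) = m' + C^flat  iff  m' \in C^sharp \cap (C^flat + C m). *)
Definition theta_rel (M : lmodType R) (C : relation M) (m m' : M) : Prop :=
  rel_sharp C m' /\ exists c k, [/\ m' = c + k, rel_flat C c & C m k].

End Rel.

(* Main.v *)
Require Import Defs.
From HB Require Import structures.
From mathcomp Require Import all_boot all_algebra.
Import GRing.Theory.
Local Open Scope ring_scope.

Lemma ev0_gen (R : comPzRingType) (X : lmodType R) (P : X -> X -> Prop)
  (u : nat -> X) N :
  (forall n, P (u n) (u n.+1)) -> (forall a, P a 0 -> a = 0) ->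
  (forall n, (N <= n)%N -> u n = 0) -> u 0%N = 0.
Proof.
move=> Hs H0 HN.
have H : forall d n, (N <= n + d)%N -> u n = 0.
  elim=> [|d IH] n Hn; first by apply: HN; rewrite addn0 in Hn.
  apply: H0; rewrite -(IH n.+1); first exact: Hs.
  by rewrite addSn -addnS.
by apply: (H N 0%N); rewrite add0n.
Qed.

Theorem lemma4p7 (R : comPzRingType) :
  (forall (L M : lmodType R) (B : relation L) (C : relation M)
          (f : {linear L -> M}),
      is_linear_relation B -> is_linear_relation C ->
      is_rel_morphism B C f ->
      [/\ (forall l, rel_sharp B l -> rel_sharp C (f l)),
          (forall l, rel_flat B l -> rel_flat C (f l))
        & (forall l l', rel_sharp B l -> theta_rel B l l' ->
                        theta_rel C (f l) (f l'))]) /\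
  (forall (X Y : lmodType R) (t : {linear X -> X}) (s : {linear Y -> Y}),
      bijective t -> bijective s ->
      is_linear_relation (graph t) /\
      (forall g : {linear X -> Y}, (forall x, g (t x) = s (g x)) ->
         is_rel_morphism (graph t) (graph s) g)) /\
  (forall (X : lmodType R) (t : {linear X -> X}),
      bijective t ->
      [/\ (forall x, rel_sharp (graph t) x),
          (forall x, rel_flat (graph t) x <-> x = 0)
        & (forall x x', theta_rel (graph t) x x' <-> x' = t x)]).
Proof.
split.
  move=> L M B C f _ _ Hf.
  have dd : forall (B' : relation L) (C' : relation M),
      (forall x y, B' x y -> C' (f x) (f y)) ->
      forall l, rel_dd B' l -> rel_dd C' (f l).
    move=> B' C' H l [u [u0 Hu]]; exists (fun n => f (u n)); split.
      by rewrite u0.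
    by move=> n; apply: H.
  have d1 : forall (B' : relation L) (C' : relation M),
      (forall x y, B' x y -> C' (f x) (f y)) ->
      forall l, rel_d B' l -> rel_d C' (f l).
    move=> B' C' H l [u [u0 Hu [N HN]]]; exists (fun n => f (u n)); split.
    - by rewrite u0.
    - by move=> n; apply: H.
    - by exists N => n Hn; rewrite HN // raddf0.
  have Hfi : forall x y, rel_inv B x y -> rel_inv C (f x) (f y).
    by move=> x y; apply: Hf.
  have sh : forall l, rel_sharp B l -> rel_sharp C (f l).
    by move=> l [H1 H2]; split; [apply: (dd B) | apply: (dd (rel_inv B))].
  have fl : forall l, rel_flat B l -> rel_flat C (f l).
    move=> l [a [b [-> [Ha1 Ha2] [Hb1 Hb2]]]].
    exists (f a), (f b); split.
    - by rewrite linearD.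
    - by split; [apply: (dd B) | apply: (d1 (rel_inv B))].
    - by split; [apply: (dd (rel_inv B)) | apply: (d1 B)].
  split => //.
  move=> l l' _ [Hs [c [k [E Hc Hk]]]]; subst l'.
  rewrite /theta_rel; split; first exact: (sh _ Hs).
  exists (f c), (f k); split; [by rewrite linearD | by apply: fl | by apply: Hf].
split.
  move=> X Y t s _ _; split.
    split; rewrite /graph.
    - by rewrite raddf0.
    - by move=> x y x' y' -> ->; rewrite linearD.
    - by move=> a x y ->; rewrite linearZ.
  by move=> g Hg x y ->; rewrite /graph Hg.
move=> X t [g tg gt].
have flat0 : forall x, rel_flat (graph t) x -> x = 0.
  move=> x [a [b [-> [_ [v [v0 Hv [N HN]]]]] [_ [w [w0 Hw [M HM]]]]]].
  have -> : a = 0.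
    rewrite -v0; apply: (@ev0_gen R X (fun x y => x = t y) v N) HN => //.
    by move=> a' ->; rewrite raddf0.
  have -> : b = 0.
    rewrite -w0; apply: (@ev0_gen R X (fun x y => y = t x) w M) HM => //.
    by move=> a' H; rewrite -(tg a') -H -{1}(raddf0 t) tg.
  by rewrite addr0.
have flatI : forall x, x = 0 -> rel_flat (graph t) x.
  move=> x ->.
  have z : graph t 0 0 by rewrite /graph raddf0.
  have zi : rel_inv (graph t) 0 0 by rewrite /rel_inv /graph raddf0.
  have ddz : forall P : relation X, P 0 0 -> rel_dd P 0.
    by move=> P HP; exists (fun _ => 0); split.
  have dz : forall P : relation X, P 0 0 -> rel_d P 0.
    by move=> P HP; exists (fun _ => 0); split => //; exists 0%N.
  exists 0, 0; split; first by rewrite addr0.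
  - by split; [apply: ddz | apply: dz].
  - by split; [apply: ddz | apply: dz].
have sh : forall x, rel_sharp (graph t) x.
  move=> x; split.
    by exists (fun n => iter n t x); split.
  by exists (fun n => iter n g x); split => // n; rewrite /rel_inv /graph /= gt.
split => //.
  by move=> x; split; [apply: flat0 | apply: flatI].
move=> x x'; split.
  by move=> [_ [c [k [-> /flat0 -> ->]]]]; rewrite add0r.
move=> ->; split => //; exists 0, (t x); split => //; first by rewrite add0r.
exact: flatI.
Qed.
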